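(* Let $\epsilon>0$, $k=b/((1+\epsilon)\ln b)$, $b$ sufficiently large, and let $T$ be the complete tree with branching factor $b$ and height $H\ge1$, root $r$. Fix a leaf $z$ and let $w_1$ be the child of $r$ on the path from $r$ to $z$. Let $\sigma$ be a uniformly random proper $k$-coloring of $T$, and let $\mathcal A(\sigma;1,z)$ be the event that no sibling $y$ of $w_1$ (child of $r$ other than $w_1$) satisfies both $\sigma(y)=\sigma(w_1)$ and $y$ frozen in $\sigma$. Then for any colors $c^*\ne c_1$, $\Pr[\mathcal A(\sigma;1,z)\mid \sigma(r)=c^*,\sigma(w_1)=c_1]\le b^{-(1+\epsilon)+\delta}$, where $\delta=(1+\epsilon)/b^{\epsilon}$ if $\epsilon<1$ and $\delta=0$ if $\epsilon\ge1$.
   Context: A vertex $v$ is frozen in $\sigma$ if every proper coloring agreeing with $\sigma$ on the leaves of the subtree rooted at $v$ gives $v$ the color $\sigma(v)$; leaves are always frozen. *)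

(* Defs.v *)
From mathcomp Require Import all_boot.
From Stdlib Require Import Reals.
Set Implicit Arguments. Unset Strict Implicit. Unset Printing Implicit Defensive.

(* Vertices of the complete b-ary tree of height H: words over 'I_b of
   length at most H (the root is the empty word; the children of u are the
   words rcons u i). *)
Definition vtx (b H : nat) : finType := {n : 'I_H.+1 & n.-tuple 'I_b}.

Definition word {b H} (v : vtx b H) : seq 'I_b := val (tagged v).
Definition depth {b H} (v : vtx b H) : nat := size (word v).

Definition child {b H} (u v : vtx b H) : bool :=
  (depth u == (depth v).+1) && (take (depth v) (word u) == word v).

Definition is_leaf {b H} (v : vtx b H) : bool := depth v == H.

Definition in_subtree {b H} (v u : vtx b H) : bool :=
  (depth v <= depth u) && (take (depth v) (word u) == word v).

Definition coloring (b H k : nat) := {ffun vtx b H -> 'I_k}.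

Definition proper {b H k} (s : coloring b H k) : bool :=
  [forall u, forall v, child u v ==> (s u != s v)].

Definition proper_on {b H k} (v : vtx b H) (s : coloring b H k) : bool :=
  [forall u, forall w,
     (in_subtree v u && in_subtree v w && child u w) ==> (s u != s w)].

Definition frozen {b H k} (s : coloring b H k) (v : vtx b H) : bool :=
  [forall t : coloring b H k,
     (proper_on v t &&
      [forall u, (in_subtree v u && is_leaf u) ==> (t u == s u)])
     ==> (t v == s v)].

(* event A(s;1,z), where w1 is the child of the root on the path to z *)
Definition eventA {b H k} (w1 : vtx b H) (s : coloring b H k) : bool :=
  ~~ [exists y : vtx b H,
        [&& depth y == 1, y != w1, s y == s w1 & frozen s y]].

(* Conditional probability, for a uniformly random proper coloring s, of
   event E given s r = c and s w1 = c1 (ratio of counts; 0 if the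
   conditioning event is empty). *)
Definition cond_prob {b H k} (E : pred (coloring b H k))
    (r w1 : vtx b H) (c c1 : 'I_k) : R :=
  (INR #|[set s : coloring b H k | [&& proper s, s r == c, s w1 == c1 & E s]]|
   / INR #|[set s : coloring b H k | [&& proper s, s r == c & s w1 == c1]]|)%R.

(* Main.v *)
Require Import Defs.
From mathcomp Require Import all_boot.
From Stdlib Require Import Reals.
From Stdlib Require Import Lia Lra.
From mathcomp Require Import zify.

Open Scope R_scope.

Lemma one_minus_le_exp x : 1 - x <= exp (- x).
Proof. have := exp_ineq1_le (- x); lra. Qed.

Lemma exp_pow_nat a n : exp a ^ n = exp (INR n * a).
Proof.
induction n as [|n IH]; first by rewrite /= Rmult_0_l exp_0.
rewrite S_INR [exp a ^ _]/= IH -exp_plus; f_equal; ring.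
Qed.

Lemma pow_le_exp beta u n : 0 <= beta -> beta <= 1 - u -> beta ^ n <= exp (- (INR n * u)).
Proof.
move=> h0 h1.
have h2 : beta <= exp (- u) by have := one_minus_le_exp u; lra.
apply: Rle_trans (pow_incr beta (exp (- u)) n (conj h0 h2)) _.
rewrite exp_pow_nat; right; f_equal; ring.
Qed.

Lemma exp_le x y : x <= y -> exp x <= exp y.
Proof. case=> h; [left; exact: exp_increasing | by rewrite h; right]. Qed.

Lemma ln_le_exp y : y < exp y.
Proof. have := exp_ineq1_le y; lra. Qed.

Lemma core_bounds (eps b L K : R) (bn : nat) :
  0 < eps -> b = INR bn -> 0 < b -> L = ln b -> 3 < L ->
  (2 / eps) * ln (2 * (1 + eps) / eps) < L ->
  1 <= K -> K * ((1 + eps) * L) <= b - (1 + eps) * L ->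
  let th := exp (- eps * L) in
  let beta := 1 - (1 - th) / K in
  [/\ 0 <= th, K * (K - 1 + th) ^ bn <= th * K ^ bn &
      beta ^ (bn - 1) <= exp ((- (1 + eps) + (if Rlt_dec eps 1 then (1 + eps) / exp (eps * L) else 0)) * L)].
Proof.
move=> he hb b0 hL L3 Lbig K1 hK th beta.
have aL3 : 3 < (1 + eps) * L by nra.
have eb : exp L = b by rewrite hL exp_ln.
have th0 : 0 < th by apply: exp_pos.
pose E := exp (eps * L / 2).
have E0 : 0 < E by apply: exp_pos.
have thE : th * (E * E) = 1.
  rewrite /th /E -exp_plus -exp_plus -exp_0; f_equal; field.
have LE : L * eps / 2 < E.
  have := ln_le_exp (eps * L / 2); rewrite -/E; lra.
have aE : 2 * (1 + eps) < eps * E.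
  have h1 : ln (2 * (1 + eps) / eps) < eps * L / 2.
    apply: (Rmult_lt_reg_l (2 / eps)).
      apply: Rdiv_lt_0_compat; lra.
    have -> : 2 / eps * (eps * L / 2) = L by field; lra.
    exact: Lbig.
  have h2 := exp_increasing _ _ h1.
  rewrite exp_ln in h2; last by apply: Rdiv_lt_0_compat; lra.
  rewrite -/E in h2.
  have := Rmult_lt_compat_l eps _ _ he h2.
  have -> : eps * (2 * (1 + eps) / eps) = 2 * (1 + eps) by field; lra.
  done.
have thsmall : (1 + eps) * L * th <= 1.
  have h3 : (1 + eps) * L < E * E.
    apply: (Rmult_lt_reg_l eps) => //. nra.
  have := Rmult_lt_compat_r th _ _ th0 h3; rewrite Rmult_comm in thE; rewrite thE; lra.
have K0 : 0 < K by lra.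
have th1 : th <= 1.
  rewrite /th -exp_0; apply: exp_le; nra.
set u := (1 - th) / K.
have uK : u * K = 1 - th by rewrite /u; field; lra.
have u0 : 0 <= u.
  apply: (Rmult_le_reg_r K) => //; rewrite uK; lra.
have betaE : beta = 1 - u by [].
have beta0 : 0 <= beta.
  have : u <= 1 by apply: (Rmult_le_reg_r K) => //; rewrite uK; lra.
  lra.
have bpos : (1 <= bn)%coq_nat.
  case: bn hb => [|n] hb; last by lia. by rewrite hb /= in b0; lra.
split.
- lra.
- have Kb : K - 1 + th = K * beta by rewrite betaE; nra.
  rewrite Kb Rpow_mult_distr.
  suff h : K * beta ^ bn <= th.
    have hp : 0 <= K ^ bn by apply: pow_le; lra.
    have := Rmult_le_compat_r _ _ _ hp h. lra.
  have s1 : beta ^ bn <= exp (- (INR bn * u)) by apply: pow_le_exp => //; lra.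
  rewrite -hb in s1.
  have s2 : exp (- (b * u)) <= exp (- ((1 + eps) * L * (1 - th))).
    apply: exp_le.
    have : (1 + eps) * L * K <= b by nra.
    rewrite -uK. nra.
  have s3 : exp (- ((1 + eps) * L * (1 - th))) <= 3 * exp (- ((1 + eps) * L)).
    have -> : - ((1 + eps) * L * (1 - th)) = - ((1 + eps) * L) + (1 + eps) * L * th by ring.
    rewrite exp_plus.
    have : exp ((1 + eps) * L * th) <= 3.
      apply: Rle_trans exp_le_3; apply: exp_le; lra.
    have := exp_pos (- ((1 + eps) * L)). nra.
  have s4 : exp (- ((1 + eps) * L)) * b = th.
    rewrite -eb -exp_plus /th; f_equal; ring.
  have s5 : K * (3 * exp (- ((1 + eps) * L))) <= th.
    have hx := exp_pos (- ((1 + eps) * L)).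
    have : K * ((1 + eps) * L) <= b by nra.
    nra.
  have hb' : 0 <= K by lra.
  have := Rmult_le_compat_l K _ _ hb' (Rle_trans _ _ _ s1 (Rle_trans _ _ _ s2 s3)).
  lra.
- have s1 : beta ^ (bn - 1) <= exp (- (INR (bn - 1) * u)) by apply: pow_le_exp => //; lra.
  rewrite minus_INR // -hb /= in s1.
  apply: Rle_trans s1 _; apply: exp_le.
  case: Rlt_dec => he1.
  + have -> : (1 + eps) / exp (eps * L) = (1 + eps) * th.
      by rewrite /th -[- eps * L]Ropp_mult_distr_l exp_Ropp.
    have h0 : (1 + eps) * L * K <= b - 1 by nra.
    have h2 : 0 <= u * ((b - 1) - (1 + eps) * L * K) by apply: Rmult_le_pos; lra.
    have h3 : (1 + eps) * L * (u * K) = (1 + eps) * L * (1 - th) by rewrite uK.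
    rewrite /=; nra.
  + have thb : th * b <= 1.
      rewrite -eb /th -exp_plus -exp_0; apply: exp_le; nra.
    have h1 : (b - 1) * (1 - th) >= (1 + eps) * L * K by nra.
    have h3 : (b - 1) * (u * K) = (b - 1) * (1 - th) by rewrite uK.
    have h4 : 0 <= K * ((b - 1) * u - (1 + eps) * L) by nra.
    have h5 : 0 <= (b - 1) * u - (1 + eps) * L.
      apply: (Rmult_le_reg_l K) => //; lra.
    rewrite /=; nra.
Qed.

Close Scope R_scope.
Set Implicit Arguments. Unset Strict Implicit. Unset Printing Implicit Defensive.

Lemma word_size b H (v : vtx b H) : depth v <= H.
Proof. case: v => [[n hn] t]; rewrite /depth /word /= size_tuple. by rewrite -ltnS. Qed.

Lemma word_inj b H (v w : vtx b H) : word v = word w -> v = w.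
Proof.
case: v => [[n hn] [s hs]]; case: w => [[m hm] [s' hs']]; rewrite /word /= => E.
subst s'. have E: n = m := etrans (esym (eqP hs)) (eqP hs').
subst m. by rewrite (bool_irrelevance hn hm) (bool_irrelevance hs hs').
Qed.

Definition vofw b H (s : seq 'I_b) (Hs : size s < H.+1) : vtx b H :=
  @existT 'I_H.+1 (fun n => n.-tuple 'I_b) (Ordinal Hs) (in_tuple s).

Lemma word_vofw b H s (Hs : size s < H.+1) : word (@vofw b H s Hs) = s.
Proof. by []. Qed.

Definition childv b H (v : vtx b H) (i : 'I_b) : vtx b H :=
  match @idP (size (rcons (word v) i) < H.+1) with
  | ReflectT h => vofw h | ReflectF _ => v end.

Lemma word_childv b H (v : vtx b H) i : depth v < H -> word (childv v i) = rcons (word v) i.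
Proof.
move=> hv; rewrite /childv; destruct (@idP (size (rcons (word v) i) < H.+1)) as [h|h] => //; exfalso; apply: h.
by rewrite size_rcons ltnS.
Qed.

Lemma depth_childv b H (v : vtx b H) i : depth v < H -> depth (childv v i) = (depth v).+1.
Proof. by move=> hv; rewrite /depth word_childv // size_rcons. Qed.

Lemma in_subtreeP b H (v w : vtx b H) :
  reflect (exists s, word w = word v ++ s) (in_subtree v w).
Proof.
apply: (iffP andP).
  case=> _ /eqP E; exists (drop (depth v) (word w)); by rewrite -E cat_take_drop.
case=> s E; rewrite /depth E size_cat take_size_cat ?leq_addr //.
Qed.

Lemma childP b H (a p : vtx b H) :
  reflect (exists i, word a = rcons (word p) i) (child a p).
Proof.
apply: (iffP andP).
  case=> /eqP D /eqP E. move: D; rewrite /depth => D.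
  have := cat_take_drop (size (word p)) (word a). rewrite E.
  case Ed: (drop (size (word p)) (word a)) => [|i s].
    by move: (f_equal size Ed); rewrite size_drop D subSnn.
  have: size (i :: s) = 1 by rewrite -Ed size_drop D subSnn.
  case: s Ed => // Ed _ <-. exists i. by rewrite cats1.
case=> i E; rewrite /depth E size_rcons -cats1 take_size_cat //.
Qed.

Lemma in_subtree_refl b H (v : vtx b H) : in_subtree v v.
Proof. apply/in_subtreeP; exists [::]; by rewrite cats0. Qed.

Lemma in_subtree_trans b H (u v w : vtx b H) :
  in_subtree u v -> in_subtree v w -> in_subtree u w.
Proof.
move=> /in_subtreeP [s1 E1] /in_subtreeP [s2 E2]; apply/in_subtreeP.
exists (s1 ++ s2); by rewrite E2 E1 catA.
Qed.

Lemma child_sub b H (a p : vtx b H) : child a p -> in_subtree p a.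
Proof. move=> /childP [i E]; apply/in_subtreeP; exists [:: i]; by rewrite E cats1. Qed.

Lemma in_subtree_depth b H (v w : vtx b H) : in_subtree v w -> depth v <= depth w.
Proof. by case/andP. Qed.

Lemma childv_child b H (v : vtx b H) i : depth v < H -> child (childv v i) v.
Proof. move=> hv; apply/childP; exists i; by rewrite word_childv. Qed.

Definition cidx b H (v w : vtx b H) : option 'I_b := ohead (drop (depth v) (word w)).

Lemma sub_child_cases b H (v w : vtx b H) : in_subtree v w -> w != v ->
  exists i, [/\ depth v < H, cidx v w = Some i & in_subtree (childv v i) w].
Proof.
move=> /in_subtreeP [s E] nwv. case: s E => [|i s] E.
  by rewrite cats0 in E; move/eqP: nwv; case; apply: word_inj.
have hv : depth v < H.
  have := word_size w; rewrite /depth E size_cat /= addnS. exact: leq_ltn_trans (leq_addr _ _).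
exists i; split => //.
  by rewrite /cidx E /depth drop_size_cat.
apply/in_subtreeP; exists s; by rewrite word_childv // E cat_rcons.
Qed.

Lemma sub_childv b H (v w : vtx b H) i : depth v < H -> in_subtree (childv v i) w ->
  [/\ in_subtree v w, w != v & cidx v w = Some i].
Proof.
move=> hv /in_subtreeP [s E]; rewrite word_childv // in E.
split.
- apply/in_subtreeP; exists (i :: s); by rewrite E cat_rcons.
- apply/eqP => ew; have := f_equal size E; rewrite ew size_cat size_rcons; lia.
- by rewrite /cidx E /depth -cats1 -catA drop_size_cat.
Qed.

Lemma child_of_v b H (a v : vtx b H) : child a v -> exists i, depth v < H /\ a = childv v i.
Proof.
move=> /childP [i E].
have hv: depth v < H. have := word_size a; by rewrite /depth E size_rcons.
exists i; split => //; apply: word_inj; by rewrite word_childv.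
Qed.


Definition gl {b H k} (v : vtx b H) (x : 'I_k) (f : 'I_b -> coloring b H k)
   (dflt : coloring b H k) : coloring b H k :=
  [ffun w => if w == v then x else if in_subtree v w then
     (if cidx v w is Some i then f i w else dflt w) else dflt w].

Lemma gl_v b H k (v : vtx b H) (x : 'I_k) f dflt : gl v x f dflt v = x.
Proof. by rewrite ffunE eqxx. Qed.

Lemma gl_out b H k (v w : vtx b H) (x : 'I_k) f dflt : ~~ in_subtree v w -> gl v x f dflt w = dflt w.
Proof.
move=> nw; rewrite ffunE (negbTE nw); case: eqP => // E; subst w.
by rewrite in_subtree_refl in nw.
Qed.

Lemma gl_child b H k (v w : vtx b H) (x : 'I_k) f dflt i :
  depth v < H -> in_subtree (childv v i) w -> gl v x f dflt w = f i w.
Proof.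
move=> hv hw; case: (sub_childv hv hw) => sw nwv ci.
by rewrite ffunE (negbTE nwv) sw ci.
Qed.

Lemma proper_onP b H k (v : vtx b H) (t : coloring b H k) :
  reflect (forall a p, in_subtree v a -> in_subtree v p -> child a p -> t a != t p)
          (proper_on v t).
Proof.
apply: (iffP forallP).
  move=> h a p sa sp ap; have /forallP /(_ p) := h a. by rewrite sa sp ap.
move=> h a; apply/forallP => p; apply/implyP => /andP [/andP [sa sp] ap]; exact: h.
Qed.

Lemma proper_on_sub b H k (u v : vtx b H) (t : coloring b H k) :
  in_subtree v u -> proper_on v t -> proper_on u t.
Proof.
move=> vu /proper_onP h; apply/proper_onP => a p sa sp ap.
apply: h => //; exact: in_subtree_trans vu _.
Qed.

Lemma gl_proper b H k (v : vtx b H) (x : 'I_k) f dflt :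
  depth v < H ->
  (forall i, proper_on (childv v i) (f i)) -> (forall i, f i (childv v i) != x) ->
  proper_on v (gl v x f dflt).
Proof.
move=> hv pf fx; apply/proper_onP => a p sa sp ap.
case: (eqVneq p v) => [E | npv].
  subst p. case: (child_of_v ap) => i [_ ->].
  rewrite gl_v (gl_child _ _ _ hv (in_subtree_refl _)); exact: fx.
case: (sub_child_cases sp npv) => i [_ ci sip].
have sia : in_subtree (childv v i) a := in_subtree_trans sip (child_sub ap).
rewrite (gl_child _ _ _ hv sia) (gl_child _ _ _ hv sip).
by move/proper_onP: (pf i); apply.
Qed.

Definition leafagree {b H k} (v : vtx b H) (t s : coloring b H k) : bool :=
  [forall u, (in_subtree v u && is_leaf u) ==> (t u == s u)].

Lemma frozenE b H k (s : coloring b H k) v :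
  frozen s v = [forall t : coloring b H k, (proper_on v t && leafagree v t s) ==> (t v == s v)].
Proof. by []. Qed.

Lemma frozen_local b H k (s s' : coloring b H k) v :
  (forall w, in_subtree v w -> s w = s' w) -> frozen s v = frozen s' v.
Proof.
move=> E; rewrite !frozenE; apply: eq_forallb => t.
rewrite -E ?in_subtree_refl //; congr ((_ && _) ==> _).
apply: eq_forallb => u; case: (boolP (in_subtree v u)) => //= su.
by rewrite E.
Qed.

Lemma frozen_leaf b H k (s : coloring b H k) v : is_leaf v -> frozen s v.
Proof.
move=> lv; rewrite frozenE; apply/forallP => t; apply/implyP => /andP [_ /forallP /(_ v)].
by rewrite in_subtree_refl lv.
Qed.

Lemma frozen_rec b H k (s : coloring b H k) v : depth v < H -> proper_on v s ->
  frozen s v = [forall c, (c != s v) ==>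
     [exists i, (s (childv v i) == c) && frozen s (childv v i)]].
Proof.
move=> hv ps; apply/idP/idP.
- move=> fr; apply/forallP => c; apply/implyP => nc.
  case: (boolP [exists i, _]) => // /existsPn nex; exfalso.
  pose T i := if s (childv v i) == c then
     odflt s [pick t | proper_on (childv v i) t && leafagree (childv v i) t s
                        && (t (childv v i) != s (childv v i))] else s.
  have HT : forall i, [/\ proper_on (childv v i) (T i), leafagree (childv v i) (T i) s
                        & T i (childv v i) != c].
    move=> i; rewrite /T; case: eqP => [ec | nec].
      case: pickP => [t0 /andP [/andP [h1 h2] h3] | none]; first by rewrite ec in h3; split.
      have := nex i; rewrite ec eqxx /= frozenE negb_forall => /existsP [t0].
      rewrite negb_imply => /andP [/andP [h1 h2] h3].
      by have := none t0; rewrite h1 h2 h3.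
    split.
    + by apply: proper_on_sub ps; apply: child_sub; apply: childv_child.
    + by apply/forallP => u; apply/implyP => _.
    + by apply/eqP.
  pose t := gl v c T s.
  suff H1 : proper_on v t && leafagree v t s.
    have := fr; rewrite frozenE => /forallP /(_ t) /implyP /(_ H1).
    by rewrite gl_v (negbTE nc).
  rewrite gl_proper //; last 2 first.
  - by move=> i; case: (HT i).
  - by move=> i; case: (HT i).
  apply/forallP => u; apply/implyP => /andP [su lu].
  have nuv : u != v by apply/eqP => E; subst u; move: lu; rewrite /is_leaf => /eqP E; rewrite E ltnn in hv.
  case: (sub_child_cases su nuv) => i [_ _ siu].
  rewrite (gl_child _ _ _ hv siu). case: (HT i) => _ /forallP /(_ u) + _.
  by rewrite siu lu.
- move=> /forallP h; rewrite frozenE; apply/forallP => t; apply/implyP => /andP [pt la].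
  case: (eqVneq (t v) (s v)) => // ne.
  have /existsP [i /andP [/eqP si fi]] := implyP (h (t v)) ne.
  have cv := childv_child i hv.
  have svu : in_subtree v (childv v i) := child_sub cv.
  move: fi; rewrite frozenE => /forallP /(_ t) /implyP.
  rewrite (proper_on_sub svu pt) /=.
  have -> : leafagree (childv v i) t s.
    apply/forallP => u; apply/implyP => /andP [su lu].
    move/forallP: la => /(_ u); rewrite (in_subtree_trans svu su) lu; exact.
  move=> /(_ isT) /eqP; rewrite si => E.
  by move/proper_onP: pt => /(_ _ _ svu (in_subtree_refl v) cv); rewrite E eqxx.
Qed.


Lemma card_fam (b : nat) (T : finType) (B : 'I_b -> {set T}) :
  #|(family_mem (fun i => mem (B i)) : simpl_pred {ffun 'I_b -> T})| = \prod_(i < b) #|B i|.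
Proof. rewrite card_family foldrE big_map big_enum /=. done. Qed.

Definition InSub {b H k} (d0 : 'I_k) (v : vtx b H) (t : coloring b H k) : bool :=
  [forall w, ~~ in_subtree v w ==> (t w == d0)].

Definition restr {b H k} (d0 : 'I_k) (u : vtx b H) (t : coloring b H k) : coloring b H k :=
  [ffun w => if in_subtree u w then t w else d0].

Lemma proper_on_ext b H k (u : vtx b H) (t t' : coloring b H k) :
  (forall w, in_subtree u w -> t w = t' w) -> proper_on u t = proper_on u t'.
Proof.
move=> E; apply/proper_onP/proper_onP => h a p sa sp ap.
  by rewrite -!E //; apply: h.
by rewrite !E //; apply: h.
Qed.

Lemma prod_count b H k (d0 : 'I_k) (v : vtx b H) (x : 'I_k)
    (Q : 'I_b -> pred (coloring b H k)) :
  depth v < H ->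
  (forall i (t t' : coloring b H k), (forall w, in_subtree (childv v i) w -> t w = t' w) -> Q i t = Q i t') ->
  #|[set t | [&& InSub d0 v t, proper_on v t, t v == x & [forall i, Q i t]]]| =
  \prod_(i < b) #|[set t | [&& InSub d0 (childv v i) t, proper_on (childv v i) t,
                              t (childv v i) != x & Q i t]]|.
Proof.
move=> hv hQ.
set A := [set t | _].
pose phi (t : coloring b H k) : {ffun 'I_b -> coloring b H k} :=
  [ffun i => restr d0 (childv v i) t].
have restrE : forall i t w, in_subtree (childv v i) w -> restr d0 (childv v i) t w = t w.
  by move=> i t w h; rewrite ffunE h.
rewrite -(@card_in_imset _ _ phi A); last first.
  move=> t t'; rewrite !inE => /and4P [st pt tv _] /and4P [st' pt' tv' _] E.
  apply/ffunP => w.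
  case: (eqVneq w v) => [-> | nwv]; first by rewrite (eqP tv) (eqP tv').
  case: (boolP (in_subtree v w)) => sw.
    case: (sub_child_cases sw nwv) => i [_ _ siw].
    have := congr1 (fun g : {ffun 'I_b -> coloring b H k} => g i w) E; rewrite /phi !ffunE.
    by rewrite siw.
  by move/forallP: st => /(_ w); rewrite sw => /eqP ->; move/forallP: st' => /(_ w); rewrite sw => /eqP ->.
rewrite -card_fam; apply: eq_card => g; apply/imsetP/familyP.
- case=> t; rewrite inE => /and4P [st pt tv /forallP qt] -> i.
  have cv := childv_child i hv. have svu := child_sub cv.
  rewrite inE; apply/and4P; split.
  + apply/forallP => w; apply/implyP => nw. by rewrite /phi !ffunE (negbTE nw).
  + rewrite /phi ffunE (proper_on_ext (t' := t)); first exact: proper_on_sub svu pt.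
    by move=> w h; rewrite restrE.
  + rewrite /phi ffunE restrE ?in_subtree_refl // -(eqP tv).
    by move/proper_onP: pt; apply => //; exact: in_subtree_refl.
  + rewrite /phi ffunE (hQ i _ t) ?qt //. by move=> w h; rewrite restrE.
- move=> hg. pose t := gl v x g [ffun _ => d0].
  have hgi : forall i, [&& InSub d0 (childv v i) (g i), proper_on (childv v i) (g i),
                          g i (childv v i) != x & Q i (g i)].
    by move=> i; have := hg i; rewrite inE.
  exists t.
    rewrite inE; apply/and4P; split.
    + apply/forallP => w; apply/implyP => nw; by rewrite gl_out // ffunE.
    + apply: gl_proper => // i; by case/and4P: (hgi i).
    + by rewrite gl_v.
    + apply/forallP => i; rewrite (hQ i _ (g i)); first by case/and4P: (hgi i).
      by move=> w h; rewrite (gl_child _ _ _ hv h).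
  apply/ffunP => i; apply/ffunP => w; rewrite /phi ffunE /restr ffunE.
  case: (boolP (in_subtree (childv v i) w)) => h.
    by rewrite /t (gl_child _ _ _ hv h).
  case/and4P: (hgi i) => /forallP /(_ w); by rewrite h => /eqP ->.
Qed.


Lemma INR_muln m n : INR (m * n) = (INR m * INR n)%R.
Proof. by rewrite -mult_INR. Qed.
Lemma INR_addn m n : INR (m + n) = (INR m + INR n)%R.
Proof. by rewrite -plus_INR. Qed.
Lemma INR_expn m n : INR (expn m n) = (INR m ^ n)%R.
Proof. elim: n => [|n IH]; first by rewrite expn0. by rewrite expnS INR_muln IH. Qed.

Lemma union_bound (T J : finType) (A : {set T}) (P : pred J) (B : J -> {set T}) :
  (forall t, t \in A -> exists2 j, P j & t \in B j) -> #|A| <= \sum_(j | P j) #|B j|.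
Proof.
move=> h; rewrite -sum1_card.
apply: (@leq_trans (\sum_(t in A) \sum_(j | P j) (t \in B j))).
  apply: leq_sum => t tA; case: (h t tA) => j Pj tB.
  by rewrite (bigD1 j) //= tB leq_addr.
rewrite exchange_big; apply: leq_sum => j _.
rewrite -sum1_card big_mkcond [X in _ <= X]big_mkcond; apply: leq_sum => t _.
by case: (t \in A); case: (t \in B j).
Qed.

Lemma card_split_color (T : finType) (I : finType) (A : {set T}) (p : T -> I) (P : pred I) :
  #|[set t in A | P (p t)]| = \sum_(y | P y) #|[set t in A | p t == y]|.
Proof.
rewrite -sum1_card (partition_big p P); last by move=> t; rewrite inE => /andP [].
apply: eq_bigr => y Py; rewrite -sum1_card; apply: eq_bigl => t.
rewrite !inE; case: (t \in A) => //=; case: (eqVneq (p t) y) => [->|]; by rewrite ?Py ?andbT ?andbF.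
Qed.

Lemma prod_le (I : finType) (P : pred I) (f : I -> nat) (a : R) :
  (0 <= a)%R -> (forall i, P i -> INR (f i) <= a)%R ->
  (INR (\prod_(i | P i) f i) <= a ^ (\sum_(i | P i) 1))%R.
Proof.
move=> a0 h; apply: (big_rec2 (fun y1 y2 => INR y1 <= a ^ y2)%R).
  by rewrite /= ; lra.
move=> i y1 y2 Pi IH; rewrite INR_muln.
have -> : (a ^ (1 + y2) = a * a ^ y2)%R by [].
apply: Rmult_le_compat => //; [exact: pos_INR | exact: pos_INR | exact: h].
Qed.

Lemma sum_le (I : finType) (P : pred I) (f : I -> nat) (a : R) :
  (forall i, P i -> INR (f i) <= a)%R ->
  (INR (\sum_(i | P i) f i) <= INR (\sum_(i | P i) 1) * a)%R.
Proof.
move=> h; apply: (big_rec2 (fun y1 y2 => INR y1 <= INR y2 * a)%R).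
  by rewrite /=; lra.
move=> i y1 y2 Pi IH; rewrite !INR_addn /=. have := h i Pi. lra.
Qed.


Fixpoint Pn (k b h : nat) : nat := if h is h'.+1 then expn ((k - 1) * Pn k b h') b else 1.

Definition PS {b H k} (d0 : 'I_k) (v : vtx b H) (x : 'I_k) : {set coloring b H k} :=
  [set t | [&& InSub d0 v t, proper_on v t & t v == x]].
Definition FS {b H k} (d0 : 'I_k) (v : vtx b H) (x : 'I_k) : {set coloring b H k} :=
  [set t | [&& InSub d0 v t, proper_on v t, t v == x & frozen t v]].

Lemma leaf_sub b H (v w : vtx b H) : depth v = H -> in_subtree v w -> w = v.
Proof.
move=> dv /in_subtreeP [s E]; apply: word_inj; rewrite E.
have := word_size w; rewrite /depth E size_cat -/(depth v) dv.
case: s {E} => [|a s]; first by rewrite cats0.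
by rewrite /= addnS ltnNge leq_addr.
Qed.

Lemma PS_leaf b H k (d0 : 'I_k) (v : vtx b H) x : depth v = H -> #|PS d0 v x| = 1.
Proof.
move=> dv; apply: (@eq_card1 _ [ffun w => if w == v then x else d0]) => t.
rewrite inE /=; apply/and3P/eqP.
- case=> st _ /eqP tv; apply/ffunP => w; rewrite ffunE.
  case: (eqVneq w v) => [-> // | nwv].
  case: (boolP (in_subtree v w)) => sw; first by rewrite (leaf_sub dv sw) eqxx in nwv.
  by move/forallP: st => /(_ w); rewrite sw => /eqP.
- move=> ->; split.
  + apply/forallP => w; apply/implyP => nw; rewrite ffunE.
    case: (eqVneq w v) => [E|] //; by rewrite E in_subtree_refl in nw.
  + apply/proper_onP => a p sa sp ap.
    rewrite (leaf_sub dv sa) (leaf_sub dv sp) in ap.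
    by move: ap => /andP [/eqP + _]; lia.
  + by rewrite ffunE eqxx.
Qed.

Lemma FS_leaf b H k (d0 : 'I_k) (v : vtx b H) x : depth v = H -> FS d0 v x = PS d0 v x.
Proof.
move=> dv; apply/setP => t; rewrite !inE frozen_leaf ?andbT //.
by rewrite /is_leaf dv.
Qed.

Lemma NEQ_count b H k (d0 : 'I_k) (u : vtx b H) (x : 'I_k) n :
  (forall y, #|PS d0 u y| = n) ->
  #|[set t | [&& InSub d0 u t, proper_on u t & t u != x]]| = (k - 1) * n.
Proof.
move=> hP.
have -> : [set t | [&& InSub d0 u t, proper_on u t & t u != x]] =
          [set t in [set t | InSub d0 u t && proper_on u t] | (fun y => y != x) (t u)].
  by apply/setP => t; rewrite !inE andbA.
rewrite (card_split_color _ (fun t : coloring b H k => t u) (fun y => y != x)).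
rewrite (eq_bigr (fun _ => n)); last first.
  move=> y _; rewrite -(hP y); apply: eq_card => t; by rewrite !inE andbA.
by rewrite sum_nat_const cardC1 card_ord subn1.
Qed.

Lemma P_count b H k (d0 : 'I_k) h : forall (v : vtx b H) x, depth v + h = H ->
  #|PS d0 v x| = Pn k b h.
Proof.
elim: h => [|h IH] v x dv; first by rewrite addn0 in dv; rewrite PS_leaf.
have hv : depth v < H by lia.
have dc : forall i, depth (childv v i) + h = H by move=> i; rewrite depth_childv //; lia.
have -> : Pn k b h.+1 = \prod_(i < b) ((k-1) * Pn k b h) by rewrite prod_nat_const card_ord.
rewrite (eq_bigr (fun i => #|[set t | [&& InSub d0 (childv v i) t, proper_on (childv v i) t,
     t (childv v i) != x & true]]|)); last first.
  move=> i _; rewrite -(@NEQ_count b H k d0 (childv v i) x (Pn k b h)); last by move=> y; apply: IH.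
  by apply: eq_card => t; rewrite !inE andbT.
rewrite -(prod_count d0 x (Q := fun _ _ => true)) //.
apply: eq_card => t; rewrite !inE.
have -> : [forall i : 'I_b, true] by apply/forallP.
by rewrite andbT.
Qed.

Lemma sum1_predT b : \sum_(i < b | predT i) 1 = b.
Proof. by rewrite sum1_card card_ord. Qed.
Lemma sum1_neq k (x : 'I_k) : \sum_(i < k | i != x) 1 = k - 1.
Proof. by rewrite sum1_card cardC1 card_ord subn1. Qed.

Lemma F_count b H k (d0 : 'I_k) (th : R) : 2 <= k -> (0 <= th)%R ->
  (INR (k-1) * (INR (k-1) - 1 + th) ^ b <= th * INR (k-1) ^ b)%R ->
  forall h (v : vtx b H) x, depth v + h = H ->
  ((1 - th) * INR (Pn k b h) <= INR #|FS d0 v x|)%R.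
Proof.
move=> hk hth hyp; elim => [|h IH] v x dv.
  rewrite addn0 in dv; rewrite FS_leaf // PS_leaf //= ; lra.
have hv : depth v < H by lia.
have dc : forall i, depth (childv v i) + h = H by move=> i; rewrite depth_childv //; lia.
set K := INR (k-1). set pn := INR (Pn k b h).
have K1 : (1 <= K)%R by apply: (le_INR 1); apply/leP; lia.
have pn0 : (0 <= pn)%R := pos_INR _.
pose G i c := [set t | [&& InSub d0 (childv v i) t, proper_on (childv v i) t,
   t (childv v i) != x & ~~ ((t (childv v i) == c) && frozen t (childv v i))]].
have hG : forall i c, c != x -> (INR #|G i c| <= (K - 1 + th) * pn)%R.
  move=> i c cx.
  have E : #|G i c| + #|FS d0 (childv v i) c| = (k-1) * Pn k b h.
    rewrite -(@NEQ_count b H k d0 (childv v i) x (Pn k b h)); last first.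
      by move=> y; apply: (P_count d0).
    rewrite -(cardID [pred t : coloring b H k | (t (childv v i) == c) && frozen t (childv v i)]
               [set t | [&& InSub d0 (childv v i) t, proper_on (childv v i) t & t (childv v i) != x]]).
    rewrite addnC; congr (_ + _); apply: eq_card => t; rewrite !inE /=;
    case: (eqVneq (t (childv v i)) c) => [->|ne]; rewrite ?cx ?eqxx ?(negbTE ne);
    by case: (InSub d0 (childv v i) t) (proper_on (childv v i) t) (frozen t (childv v i)) (t (childv v i) != x) => [] [] [] [].
  have FSb := IH (childv v i) c (dc i).
  have E' := congr1 INR E; rewrite INR_addn INR_muln -/K -/pn in E'.
  rewrite -/pn in FSb. lra.
pose BC c := [set t | [&& InSub d0 v t, proper_on v t, t v == x &
   [forall i, ~~ ((t (childv v i) == c) && frozen t (childv v i))]]].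
have hBC : forall c, c != x -> (INR #|BC c| <= ((K - 1 + th) * pn) ^ b)%R.
  move=> c cx; rewrite /BC (prod_count d0 x
     (Q := fun i t => ~~ ((t (childv v i) == c) && frozen t (childv v i)))) //; last first.
    move=> i t t' E; rewrite E ?in_subtree_refl // (frozen_local E) //.
  have := @prod_le _ predT (fun i => #|G i c|) ((K - 1 + th) * pn) _ _.
  rewrite sum1_predT; apply.
    apply: Rmult_le_pos => //; lra.
  by move=> i _; apply: hG.
pose NF := [set t | [&& InSub d0 v t, proper_on v t, t v == x & ~~ frozen t v]].
have hNF : #|NF| <= \sum_(c | c != x) #|BC c|.
  apply: union_bound => t; rewrite inE => /and4P [st pt tv nf].
  move: nf; rewrite (frozen_rec hv pt) negb_forall => /existsP [c].
  rewrite negb_imply (eqP tv) => /andP [cx /existsPn nex].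
  exists c => //; rewrite inE st pt tv /=; apply/forallP => i; exact: nex.
have E : #|FS d0 v x| + #|NF| = Pn k b h.+1.
  rewrite -(P_count d0 x dv) -(cardID [pred t : coloring b H k | frozen t v] (PS d0 v x)).
  congr (_ + _); apply: eq_card => t; rewrite !inE /=;
  by case: (InSub d0 v t) (proper_on v t) (frozen t v) (t v == x) => [] [] [] [].
have hNF' : (INR #|NF| <= K * ((K - 1 + th) * pn) ^ b)%R.
  apply: (Rle_trans _ (INR (\sum_(c | c != x) #|BC c|))); first by apply: le_INR; apply/leP.
  have := @sum_le _ (fun c => c != x) (fun c => #|BC c|) (((K - 1 + th) * pn) ^ b) hBC.
  by rewrite sum1_neq.
have E' := congr1 INR E; rewrite INR_addn /= INR_expn INR_muln -/K -/pn in E'.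
rewrite !Rpow_mult_distr in E' hNF'.
have hp : (0 <= pn ^ b)%R := pow_le _ _ pn0.
have hyp' := Rmult_le_compat_r _ _ _ hp hyp.
rewrite -/K in hyp'.
rewrite /= INR_expn INR_muln -/K -/pn Rpow_mult_distr.
set X := (K ^ b * pn ^ b)%R in E' hyp' *.
have h1 : (INR #|NF| <= th * X)%R.
  apply: (Rle_trans _ _ _ hNF'); rewrite /X -!Rmult_assoc; exact: hyp'.
rewrite Rmult_minus_distr_r Rmult_1_l.
move: E' h1; set F1 := INR _; set N1 := INR _. lra.
Qed.


Lemma root_sub b H (r w : vtx b H) : depth r = 0 -> in_subtree r w.
Proof.
move=> /eqP; rewrite /depth size_eq0 => /eqP E; apply/in_subtreeP; exists (word w).
by rewrite E.
Qed.

Lemma depth1 b H (r y : vtx b H) : depth r = 0 -> depth y = 1 ->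
  exists i, depth r < H /\ y = childv r i.
Proof.
move=> dr dy; apply: child_of_v; apply/childP.
move: dy; rewrite /depth; case E: (word y) => [|i [|j s]] //= _.
exists i; move/eqP: dr; rewrite size_eq0 => /eqP ->; by [].
Qed.

Lemma childv_inj b H (v : vtx b H) i j : depth v < H -> childv v i = childv v j -> i = j.
Proof.
move=> hv E; have := congr1 word E; rewrite !word_childv // => /eqP.
by rewrite eqseq_rcons eqxx /= => /eqP.
Qed.

Lemma proper_root b H k (r : vtx b H) (s : coloring b H k) : depth r = 0 ->
  Defs.proper s = proper_on r s.
Proof.
move=> dr; apply: eq_forallb => u; apply: eq_forallb => w.
by rewrite !root_sub.
Qed.

Lemma insub_root b H k (d0 : 'I_k) (r : vtx b H) (s : coloring b H k) : depth r = 0 ->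
  InSub d0 r s.
Proof. move=> dr; apply/forallP => w; by rewrite root_sub. Qed.

Lemma bigD1n (n : nat) (j : 'I_n) (F : 'I_n -> nat) :
  \prod_(i < n) F i = F j * \prod_(i < n | i != j) F i.
Proof. by rewrite (bigD1 j). Qed.

Lemma main_count b H k (th : R) (r w1 : vtx b H) (c c1 : 'I_k) :
  depth r = 0 -> depth w1 = 1 -> c != c1 -> (0 <= th)%R ->
  (INR (k-1) * (INR (k-1) - 1 + th) ^ b <= th * INR (k-1) ^ b)%R ->
  (INR #|[set s : coloring b H k | [&& Defs.proper s, s r == c, s w1 == c1 & eventA w1 s]]|
   <= (1 - (1 - th) / INR (k - 1)) ^ (b - 1) *
      INR #|[set s : coloring b H k | [&& Defs.proper s, s r == c & s w1 == c1]]|)%R.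
Proof.
move=> dr dw cc1 hth hyp.
have hk : 2 <= k.
  have ne : (c : nat) <> c1 by move=> E; move/eqP: cc1; apply; apply: val_inj.
  have := ltn_ord c; have := ltn_ord c1; lia.
have [i1 [hr ew1]] := depth1 dr dw.
subst w1.
have dc : forall i, depth (childv r i) + (H - 1) = H.
  move=> i; rewrite depth_childv // dr; lia.
set K := INR (k-1). set pn := INR (Pn k b (H - 1)).
have K1 : (1 <= K)%R by apply: (le_INR 1); apply/leP; lia.
have pn0 : (0 <= pn)%R := pos_INR _.
have PC : forall i y, #|PS c (childv r i) y| = Pn k b (H - 1).
  by move=> i y; apply: P_count.
pose Q i (t : coloring b H k) := if i == i1 then t (childv r i) == c1
   else ~~ ((t (childv r i) == c1) && frozen t (childv r i)).
pose Q' i (t : coloring b H k) := (i == i1) ==> (t (childv r i) == c1).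
have EM : [set s : coloring b H k | [&& Defs.proper s, s r == c, s (childv r i1) == c1 & eventA (childv r i1) s]]
   = [set t | [&& InSub c r t, proper_on r t, t r == c & [forall i, Q i t]]].
  apply/setP => s; rewrite !inE insub_root // (proper_root _ dr) /=.
  case: (proper_on r s) (s r == c) => [] [] //=.
  apply/andP/forallP.
  - case=> /eqP e1 /existsPn nex i; rewrite /Q.
    case: (eqVneq i i1) => [->|ne]; first by rewrite e1.
    have := nex (childv r i); rewrite depth_childv // dr eqxx /= -e1.
    have -> : childv r i != childv r i1 by apply/eqP => /(childv_inj hr); apply/eqP.
    by [].
  - move=> hQ; have := hQ i1; rewrite /Q eqxx => e1; split => //.
    apply/existsPn => y; apply/negP => /and4P [dy ny /eqP sy fy].
    have [i [_ ey]] := depth1 dr (eqP dy); subst y.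
    have ni : i != i1 by apply/eqP => E; rewrite E eqxx in ny.
    have := hQ i; rewrite /Q (negbTE ni) sy (eqP e1) eqxx fy; by [].
have EN : [set s : coloring b H k | [&& Defs.proper s, s r == c & s (childv r i1) == c1]]
   = [set t | [&& InSub c r t, proper_on r t, t r == c & [forall i, Q' i t]]].
  apply/setP => s; rewrite !inE insub_root // (proper_root _ dr) /=.
  case: (proper_on r s) (s r == c) => [] [] //=.
  apply/idP/forallP.
  - move=> e1 i; rewrite /Q'; apply/implyP => /eqP ->; exact: e1.
  - by move=> /(_ i1); rewrite /Q' eqxx.
rewrite EM EN.
rewrite (prod_count c c (Q := Q)) //; last first.
  move=> i t t' E; rewrite /Q E ?in_subtree_refl // (frozen_local E) //.
rewrite (prod_count c c (Q := Q')) //; last first.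
  move=> i t t' E; rewrite /Q' E ?in_subtree_refl //.
rewrite !(bigD1n i1).
have EPS : #|[set t | [&& InSub c (childv r i1) t, proper_on (childv r i1) t,
      t (childv r i1) != c & Q i1 t]]| = Pn k b (H - 1).
  rewrite -(PC i1 c1); apply: eq_card => t; rewrite !inE /Q eqxx.
  case: (eqVneq (t (childv r i1)) c1) => [->|_]; by rewrite ?andbF // eq_sym cc1 andbT.
have EPS' : #|[set t | [&& InSub c (childv r i1) t, proper_on (childv r i1) t,
      t (childv r i1) != c & Q' i1 t]]| = Pn k b (H - 1).
  rewrite -(PC i1 c1); apply: eq_card => t; rewrite !inE /Q' eqxx /=.
  case: (eqVneq (t (childv r i1)) c1) => [->|_]; by rewrite ?andbF // eq_sym cc1 andbT.
rewrite EPS EPS'.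
rewrite (eq_bigr (fun _ => (k - 1) * Pn k b (H - 1)) (P := fun i => i != i1)
  (F1 := fun i => #|[set t | [&& InSub c (childv r i) t, proper_on (childv r i) t, t (childv r i) != c & Q' i t]]|)); last first.
  move=> i ni; rewrite -(@NEQ_count b H k c (childv r i) c (Pn k b (H - 1))) //.
  apply: eq_card => t; rewrite !inE /Q'; case: (eqVneq i i1) => [E|_]; [by rewrite E eqxx in ni | by rewrite andbT].
rewrite prod_nat_const cardC1 card_ord -[b.-1]subn1 !INR_muln INR_expn INR_muln -/K -/pn.
set beta := (1 - (1 - th) / K)%R.
have hQb : forall i, i != i1 -> (INR #|[set t | [&& InSub c (childv r i) t,
      proper_on (childv r i) t, t (childv r i) != c & Q i t]]| <= beta * K * pn)%R.
  move=> i ni.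
  have E : #|[set t | [&& InSub c (childv r i) t, proper_on (childv r i) t,
      t (childv r i) != c & Q i t]]| + #|FS c (childv r i) c1| = (k-1) * Pn k b (H - 1).
    rewrite -(@NEQ_count b H k c (childv r i) c (Pn k b (H - 1))) //.
    rewrite -(cardID [pred t : coloring b H k | (t (childv r i) == c1) && frozen t (childv r i)]
               [set t | [&& InSub c (childv r i) t, proper_on (childv r i) t & t (childv r i) != c]]).
    rewrite addnC; congr (_ + _); apply: eq_card => t; rewrite !inE /Q /= ?(negbTE ni) /=;
    case: (eqVneq (t (childv r i)) c1) => [->|ne]; rewrite ?(eq_sym c1) ?cc1 ?eqxx ?(negbTE ne);
    by case: (InSub c (childv r i) t) (proper_on (childv r i) t) (frozen t (childv r i)) (t (childv r i) != c) => [] [] [] [].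
  have FSb := F_count c hk hth hyp c1 (dc i).
  have E' := congr1 INR E; rewrite INR_addn INR_muln -/K -/pn in E'.
  rewrite -/pn in FSb.
  have -> : (beta * K * pn = K * pn - (1 - th) * pn)%R.
    rewrite /beta; field; lra.
  move: E' FSb; set F1 := INR _; set G1 := INR _. lra.
have hb0 : (0 <= beta)%R.
  rewrite /beta; have : ((1 - th) / K <= 1)%R.
    apply: (Rmult_le_reg_r K); first lra.
    rewrite /Rdiv Rmult_assoc Rinv_l; lra.
  lra.
have ha0 : (0 <= beta * K * pn)%R.
  apply: Rmult_le_pos => //; apply: Rmult_le_pos => //; lra.
have hprod := @prod_le _ (fun i => i != i1) _ (beta * K * pn) ha0 hQb.
rewrite sum1_neq in hprod.
apply: Rle_trans (Rmult_le_compat_l _ _ _ pn0 hprod) _.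
rewrite Rmult_assoc Rpow_mult_distr; right; ring.
Qed.


Theorem lemma9 (eps : R) : (0 < eps)%R ->
  exists b0 : nat, forall (b k H : nat),
    (b0 <= b)%N ->
    (* k = b / ((1+eps) ln b), rounded down to an integer *)
    (INR k <= INR b / ((1 + eps) * ln (INR b)) < INR k + 1)%R ->
    (1 <= H)%N ->
    forall (r z w1 : vtx b H),
      depth r = 0%N -> is_leaf z ->
      depth w1 = 1%N -> word w1 = take 1 (word z) ->
      forall c c1 : 'I_k, c != c1 ->
        (cond_prob (eventA w1) r w1 c c1 <=
         Rpower (INR b)
           (- (1 + eps) + (if Rlt_dec eps 1
                           then (1 + eps) / Rpower (INR b) eps else 0)))%R.
Proof.
move=> he.
set A := Rmax (exp 3) (exp ((2 / eps) * ln (2 * (1 + eps) / eps))).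
have [b0 hb0] := INR_unbounded A.
exists b0 => b k H bb0 [hk _] H1 r z w1 dr _ dw _ c c1 cc1.
have hbA : (A < INR b)%R.
  apply: Rlt_le_trans (Rgt_lt _ _ hb0) _; apply: le_INR; apply/leP.
  exact: bb0.
have hb3 : (exp 3 < INR b)%R by apply: Rle_lt_trans (Rmax_l _ _) hbA.
have hbL : (exp ((2 / eps) * ln (2 * (1 + eps) / eps)) < INR b)%R.
  by apply: Rle_lt_trans (Rmax_r _ _) hbA.
have b0' : (0 < INR b)%R by have := exp_pos 3; lra.
set L := ln (INR b).
have L3 : (3 < L)%R.
  by rewrite /L -(ln_exp 3); apply: ln_increasing => //; apply: exp_pos.
have Lbig : ((2 / eps) * ln (2 * (1 + eps) / eps) < L)%R.
  by rewrite /L -(ln_exp (_ * _)); apply: ln_increasing => //; apply: exp_pos.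
have k2 : (2 <= k)%N.
  have ne : (c : nat) <> c1 by move=> E; move/eqP: cc1; apply; apply: val_inj.
  have := ltn_ord c; have := ltn_ord c1; lia.
set K := INR (k - 1).
have KE : K = (INR k - 1)%R.
  rewrite /K minus_INR /=; last by apply/leP; lia.
  by [].
have K1 : (1 <= K)%R.
  rewrite /K; apply: (le_INR 1); apply/leP; lia.
have aL0 : (0 < (1 + eps) * L)%R by apply: Rmult_lt_0_compat; lra.
have hK : (K * ((1 + eps) * L) <= INR b - (1 + eps) * L)%R.
  have : (INR k * ((1 + eps) * L) <= INR b)%R.
    have := Rmult_le_compat_r _ _ _ (Rlt_le _ _ aL0) hk.
    rewrite /Rdiv Rmult_assoc Rinv_l; last by apply: Rgt_not_eq.
    by rewrite Rmult_1_r.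
  rewrite KE; lra.
have [th0 hyp hbeta] := core_bounds eps (INR b) L K b he (erefl (INR b)) b0' (erefl L) L3 Lbig K1 hK.
have MC := main_count (H := H) dr dw cc1 th0 hyp.
rewrite /cond_prob.
set M := #|_| in MC *. set N := #|_| in MC *.
rewrite /Rpower -/L.
have hpos := exp_pos ((- (1 + eps) + (if Rlt_dec eps 1 then (1 + eps) / exp (eps * L) else 0)) * L)%R.
case: (eqVneq N 0%N) => [N0 | N0].
  have : (M <= N)%N.
    apply: subset_leq_card; apply/subsetP => s; rewrite !inE => /and4P [-> -> -> _] //.
  rewrite N0 leqn0 => /eqP ->; rewrite /= /Rdiv Rmult_0_l; lra.
have NP : (0 < INR N)%R by apply: lt_0_INR; apply/ltP; lia.
apply: (Rmult_le_reg_r (INR N)) => //.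
rewrite /Rdiv Rmult_assoc Rinv_l ?Rmult_1_r; last by lra.
apply: Rle_trans MC _.
apply: Rmult_le_compat_r; first lra.
exact: hbeta.
Qed.
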